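(* Let $\mathcal{D}$ be a document collection, fix a query $q$ with a unique relevant document $d_q$, and let $f\in[0,1]$. Consider a Repartition system: $r\ge1$ partitions $\{D^{(i)}_1,\dots,D^{(i)}_n\}$, $i=1,\dots,r$, of $\mathcal{D}$, each into $n$ pairwise disjoint shards, constructed independently at random, so that the indices of the shards containing $d_q$ in the different partitions are mutually independent; assume all partitions have the same probability distribution for $q$, i.e., there is $p:\{1,\dots,n\}\to[0,1]$ with $\sum_j p(j)=1$ and $\Pr[d_q\in D^{(i)}_j]=p(j)$ for all $i,j$. Consider also a Replication system consisting of $r$ identical replicas of one of these partitions. In both systems each of the $nr$ shards (replicas) resides on its own node, and each node independently fails to respond with probability $f$, independently of the location of $d_q$; the success probability of a selection of shards is the probability that $d_q$ lies in some selected shard (replica) whose node responds. Then for every shard selection used with the Replication system, there exists a shard selection for the Repartition system selecting the same number of shards whose success probability for $q$ is larger than or equal to that of the Replication selection.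
   Context: Distributed search model: each node searches only its own shard; the query is sent to the selected shards, and results of nodes that fail to respond are dropped. In Replication, all $r$ partitions are exact copies; in Repartition, the $r$ partitions are produced by independent applications of a randomized partitioning scheme. *)

(* Defs.v *)
From mathcomp Require Import all_boot all_order all_algebra.
Set Implicit Arguments. Unset Strict Implicit. Unset Printing Implicit Defensive.
Import Order.TTheory GRing.Theory Num.Theory.
Local Open Scope ring_scope.

(* Nodes are indexed by (i, j) : 'I_r * 'I_n : partition/replica i, shard j.
   A failure pattern says which nodes fail to respond; each node fails
   independently with probability f. *)
Definition fail_weight (R : realFieldType) (r n : nat) (f : R)
  (fl : {ffun 'I_r * 'I_n -> bool}) : R :=
  \prod_(x : 'I_r * 'I_n) (if fl x then f else 1 - f).

(* Replication: r identical copies of one partition; d_q lies in shard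
   loc : 'I_n (the same in every replica), with Pr[loc = j] = p j,
   independently of the failure pattern. *)
Definition repl_success (r n : nat) (S : {set 'I_r * 'I_n})
  (loc : 'I_n) (fl : {ffun 'I_r * 'I_n -> bool}) : bool :=
  [exists i : 'I_r, ((i, loc) \in S) && ~~ fl (i, loc)].

Definition repl_prob (R : realFieldType) (r n : nat) (p : 'I_n -> R) (f : R)
  (S : {set 'I_r * 'I_n}) : R :=
  \sum_(loc : 'I_n) \sum_(fl : {ffun 'I_r * 'I_n -> bool} | repl_success S loc fl)
     p loc * fail_weight f fl.

(* Repartition: r independently generated partitions; loc i is the index of
   the shard of partition i containing d_q; the loc i are mutually
   independent, each distributed according to p, and independent of the
   failure pattern. *)
Definition repart_success (r n : nat) (S : {set 'I_r * 'I_n})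
  (loc : {ffun 'I_r -> 'I_n}) (fl : {ffun 'I_r * 'I_n -> bool}) : bool :=
  [exists i : 'I_r, ((i, loc i) \in S) && ~~ fl (i, loc i)].

Definition repart_prob (R : realFieldType) (r n : nat) (p : 'I_n -> R) (f : R)
  (S : {set 'I_r * 'I_n}) : R :=
  \sum_(loc : {ffun 'I_r -> 'I_n})
    \sum_(fl : {ffun 'I_r * 'I_n -> bool} | repart_success S loc fl)
      (\prod_(i : 'I_r) p (loc i)) * fail_weight f fl.

(* Main.v *)
Require Import Defs.
From mathcomp Require Import all_boot all_order all_algebra.
From mathcomp Require Import ring lra.
Import Order.TTheory GRing.Theory Num.Theory.
Local Open Scope ring_scope.

Lemma sum_forall (R : realFieldType) r n (f : R) (a : pred ('I_r * 'I_n)) :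
  \sum_(fl : {ffun 'I_r * 'I_n -> bool} | [forall x, a x ==> fl x]) fail_weight f fl
  = \prod_(x : 'I_r * 'I_n) (if a x then f else 1).
Proof.
rewrite big_mkcond /=.
transitivity (\sum_(fl : {ffun 'I_r * 'I_n -> bool}) \prod_x
   (if a x then (if fl x then f else 0) else (if fl x then f else 1 - f))).
  apply: eq_bigr => fl _; rewrite /fail_weight.
  case: ifP => [/forallP H | /negbT].
    apply: eq_bigr => x _. by case: (a x) (H x) => //= ->.
  rewrite negb_forall => /existsP [x]; rewrite negb_imply => /andP [ax flx].
  by rewrite (bigD1 x) //= ax (negbTE flx) mul0r.
rewrite -(bigA_distr_bigA (fun x (b : bool) =>
   if a x then (if b then f else 0) else (if b then f else 1 - f))) /=; apply: eq_bigr => x _; rewrite big_bool /=.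
by case: (a x); rewrite ?addr0 // addrC subrK.
Qed.

Lemma fw_total (R : realFieldType) r n (f : R) :
  \sum_(fl : {ffun 'I_r * 'I_n -> bool}) fail_weight f fl = 1.
Proof.
have := @sum_forall _ r n f (@pred0 _); rewrite big1_eq => <-.
by apply: eq_bigl => fl; apply/esym/forallP.
Qed.

Lemma sum_succ (R : realFieldType) r n (f : R) (P : pred {ffun 'I_r * 'I_n -> bool})
   (a : pred ('I_r * 'I_n)) :
  (forall fl, ~~ P fl = [forall x, a x ==> fl x]) ->
  \sum_(fl | P fl) fail_weight f fl = 1 - \prod_(x : 'I_r * 'I_n) (if a x then f else 1).
Proof.
move=> H; rewrite -(@sum_forall _ r n f a) -[X in X - _](@fw_total _ r n f) [in RHS](bigID P) /=.
have -> : \sum_(fl : {ffun _ -> bool} | [forall x, a x ==> fl x]) fail_weight f fl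
   = \sum_(fl | ~~ P fl) fail_weight f fl by apply: eq_bigl => fl; rewrite H.
by rewrite addrK.
Qed.

Lemma prod_pair (R : realFieldType) r n (G : 'I_r * 'I_n -> R) :
  \prod_(x : 'I_r * 'I_n) G x = \prod_(i : 'I_r) \prod_(j : 'I_n) G (i, j).
Proof. by rewrite pair_bigA; apply: eq_bigr => -[i j]. Qed.

Lemma repl_eq (R : realFieldType) r n (p : 'I_n -> R) (f : R)
  (hp1 : \sum_(j < n) p j = 1) (S : {set 'I_r * 'I_n}) :
  repl_prob p f S = 1 - \sum_j p j * \prod_(i : 'I_r) (if (i, j) \in S then f else 1).
Proof.
rewrite /repl_prob.
transitivity (\sum_j p j * (1 - \prod_(i : 'I_r) (if (i, j) \in S then f else 1))).
  apply: eq_bigr => j _; rewrite -mulr_sumr; congr (_ * _).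
  rewrite (@sum_succ _ r n f _ (fun x => (x.2 == j) && (x \in S))).
    congr (1 - _); rewrite prod_pair; apply: eq_bigr => i _.
    rewrite (bigD1 j) //= eqxx /= big1 ?mulr1 // => j' /negbTE -> //.
  move=> fl; rewrite /repl_success negb_exists; apply/forallP/forallP => H.
    move=> [i j'] /=; apply/implyP => /andP [/eqP -> xS].
    by have := H i; rewrite xS /= negbK.
  move=> i; have := H (i, j); rewrite /= eqxx /=.
  by case: ((i, j) \in S) => //= ->.
rewrite (eq_bigr (fun j => p j - p j * \prod_(i : 'I_r) (if (i, j) \in S then f else 1))).
  by rewrite sumrB hp1.
by move=> j _; rewrite mulrBr mulr1.
Qed.

Lemma repart_eq (R : realFieldType) r n (p : 'I_n -> R) (f : R)
  (hp1 : \sum_(j < n) p j = 1) (S : {set 'I_r * 'I_n}) :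
  repart_prob p f S = 1 - \prod_(i : 'I_r) \sum_j p j * (if (i, j) \in S then f else 1).
Proof.
rewrite /repart_prob.
transitivity (\sum_(loc : {ffun 'I_r -> 'I_n}) (\prod_i p (loc i)) *
    (1 - \prod_(i : 'I_r) (if (i, loc i) \in S then f else 1))).
  apply: eq_bigr => loc _; rewrite -mulr_sumr; congr (_ * _).
  rewrite (@sum_succ _ r n f _ (fun x => (x.2 == loc x.1) && (x \in S))).
    congr (1 - _); rewrite prod_pair; apply: eq_bigr => i _.
    rewrite (bigD1 (loc i)) //= eqxx /= big1 ?mulr1 // => j' /negbTE -> //.
  move=> fl; rewrite /repart_success negb_exists; apply/forallP/forallP => H.
    move=> [i j'] /=; apply/implyP => /andP [/eqP -> xS].
    by have := H i; rewrite xS /= negbK.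
  move=> i; have := H (i, loc i); rewrite /= eqxx /=.
  by case: ((i, loc i) \in S) => //= ->.
rewrite (eq_bigr (fun loc : {ffun 'I_r -> 'I_n} => \prod_i p (loc i) -
   \prod_i (p (loc i) * (if (i, loc i) \in S then f else 1)))).
  rewrite sumrB -(bigA_distr_bigA (fun (i : 'I_r) (j : 'I_n) => p j)).
  rewrite -(bigA_distr_bigA (fun (i : 'I_r) (j : 'I_n) => p j * (if (i, j) \in S then f else 1))) /=.
  congr (_ - _).
  by rewrite (eq_bigr (fun _ => 1)) ?big1_eq // => i _; rewrite hp1.
by move=> loc _; rewrite mulrBr mulr1 big_split.
Qed.

Lemma cheb (R : realFieldType) n (p : 'I_n -> R)
  (hp1 : \sum_(j < n) p j = 1) (hp0 : forall j, 0 <= p j) (g h : 'I_n -> R) :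
  (forall a b, 0 <= (g a - g b) * (h a - h b)) ->
  (\sum_j p j * g j) * (\sum_j p j * h j) <= \sum_j p j * (g j * h j).
Proof.
move=> H.
have e1 : \sum_a \sum_b (p a * p b * (g a * h a)) = \sum_j p j * (g j * h j).
  apply: eq_bigr => a _; rewrite -[RHS]mulr1 -hp1 mulr_sumr.
  by apply: eq_bigr => b _; ring.
have e4 : \sum_a \sum_b (p a * p b * (g b * h b)) = \sum_j p j * (g j * h j).
  rewrite exchange_big /=; apply: eq_bigr => a _; rewrite -[RHS]mulr1 -hp1 mulr_sumr.
  by apply: eq_bigr => b _; ring.
have e2 : \sum_a \sum_b (p a * p b * (g a * h b)) =
    (\sum_j p j * g j) * (\sum_j p j * h j).
  rewrite mulr_suml; apply: eq_bigr => a _; rewrite mulr_sumr.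
  by apply: eq_bigr => b _; ring.
have e3 : \sum_a \sum_b (p a * p b * (g b * h a)) =
    (\sum_j p j * g j) * (\sum_j p j * h j).
  rewrite mulrC mulr_suml; apply: eq_bigr => a _; rewrite mulr_sumr.
  by apply: eq_bigr => b _; ring.
have pos : 0 <= \sum_a \sum_b (p a * p b * ((g a - g b) * (h a - h b))).
  by apply: sumr_ge0 => a _; apply: sumr_ge0 => b _; apply: mulr_ge0; [apply: mulr_ge0 | apply: H].
have eq : \sum_a \sum_b (p a * p b * ((g a - g b) * (h a - h b))) =
   \sum_a \sum_b (p a * p b * (g a * h a)) + \sum_a \sum_b (p a * p b * (g b * h b))
   - (\sum_a \sum_b (p a * p b * (g a * h b)) + \sum_a \sum_b (p a * p b * (g b * h a))).
  rewrite -!big_split -sumrB; apply: eq_bigr => a _.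
  rewrite -!big_split -sumrB; apply: eq_bigr => b _ /=; ring.
move: pos; rewrite eq e1 e2 e3 e4 => pos.
lra.
Qed.

Definition monoK n (R : realFieldType) (K : 'I_n -> nat) (g : 'I_n -> R) :=
  (forall j, 0 <= g j) /\ (forall a b, (K a <= K b)%N -> g b <= g a).
Arguments monoK {n R}.

Lemma monoK_cond n (R : realFieldType) (K : 'I_n -> nat) (g h : 'I_n -> R) :
  monoK K g -> monoK K h -> forall a b, 0 <= (g a - g b) * (h a - h b).
Proof.
move=> [_ Hg] [_ Hh] a b; case: (leqP (K a) (K b)) => hab.
  by apply: mulr_ge0; rewrite subr_ge0; [apply: Hg | apply: Hh].
have hba := ltnW hab.
by apply: mulr_le0; rewrite subr_le0; [apply: Hg | apply: Hh].
Qed.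

Lemma cheb_prod (R : realFieldType) n (p : 'I_n -> R)
  (hp1 : \sum_(j < n) p j = 1) (hp0 : forall j, 0 <= p j) (K : 'I_n -> nat)
  (I : Type) (H : I -> 'I_n -> R) :
  (forall i, monoK K (H i)) -> forall s : seq I,
  \prod_(i <- s) (\sum_j p j * H i j) <= \sum_j p j * \prod_(i <- s) H i j /\
  monoK K (fun j => \prod_(i <- s) H i j).
Proof.
move=> HH; elim=> [|a s [IH1 IH2]].
  rewrite !big_nil; split; last by split=> [j|a b _]; rewrite !big_nil; [exact: ler01 | exact: lexx].
  by under eq_bigr do rewrite big_nil mulr1; rewrite hp1.
split.
  rewrite big_cons; under [in X in _ <= X]eq_bigr do rewrite big_cons.
  apply: (le_trans _ (@cheb R n p hp1 hp0 (H a) _ (@monoK_cond n R K _ _ (HH a) IH2))).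
  apply: ler_wpM2l => //; apply: sumr_ge0 => j _; apply: mulr_ge0 => //.
  by case: (HH a) => ->.
case: (HH a) => H0 H1; case: IH2 => I0 I1; split.
  by move=> j; rewrite big_cons; apply: mulr_ge0.
by move=> x y le; rewrite !big_cons; apply: ler_pM => //; [apply: H1 | apply: I1].
Qed.

Lemma card_lt r k : (k <= r)%N -> #|[set i : 'I_r | (i < k)%N]| = k.
Proof.
move=> kr; rewrite -sum1_card.
rewrite (eq_bigl (fun i : 'I_r => (i < k)%N)); last by move=> i; rewrite inE.
by rewrite (big_ord_narrow kr) sum1_card card_ord.
Qed.

Lemma card_split r n (A : {set 'I_r * 'I_n}) :
  #|A| = (\sum_(j : 'I_n) #|[set i : 'I_r | (i, j) \in A]|)%N.
Proof.
rewrite -sum1_card big_mkcond /=.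
have -> : (\sum_(x : 'I_r * 'I_n) (if x \in A then 1 else 0) =
   \sum_(i : 'I_r) \sum_(j : 'I_n) (if (i, j) \in A then 1 else 0))%N.
  by rewrite pair_bigA; apply: eq_bigr => -[i j].
rewrite exchange_big /=; apply: eq_bigr => j _.
rewrite -big_mkcond /= -sum1_card; apply: eq_bigl => i; by rewrite inE.
Qed.

Theorem theorem2 (R : realFieldType) (r n : nat) (p : 'I_n -> R) (f : R)
  (hr : (1 <= r)%N)
  (hp0 : forall j, 0 <= p j) (hp1 : \sum_(j < n) p j = 1)
  (hf0 : 0 <= f) (hf1 : f <= 1)
  (S : {set 'I_r * 'I_n}) :
  exists S' : {set 'I_r * 'I_n},
    #|S'| = #|S| /\ repl_prob p f S <= repart_prob p f S'.
Proof.
pose k (j : 'I_n) := #|[set i : 'I_r | (i, j) \in S]|.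
have kr : forall j, (k j <= r)%N.
  by move=> j; rewrite -[X in (_ <= X)%N](card_ord r) max_card.
pose S' := [set x : 'I_r * 'I_n | (x.1 < k x.2)%N].
have cS' : forall j, #|[set i : 'I_r | (i, j) \in S']| = k j.
  move=> j; rewrite -(@card_lt r (k j) (kr j)); apply: eq_card => i; by rewrite !inE.
exists S'; split.
  by rewrite (@card_split r n S') (@card_split r n S); apply: eq_bigr => j _; rewrite cS'.
rewrite repl_eq // repart_eq //.
have eqG : forall j, \prod_(i : 'I_r) (if (i, j) \in S then f else 1) =
    \prod_(i : 'I_r) (if (i, j) \in S' then f else 1).
  move=> j; rewrite -!big_mkcond /=.
  have -> : \prod_(i | (i, j) \in S) f = \prod_(i in [set i : 'I_r | (i, j) \in S]) f.
    by apply: eq_bigl => i; rewrite inE.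
  have -> : \prod_(i | (i, j) \in S') f = \prod_(i in [set i : 'I_r | (i, j) \in S']) f.
    by apply: eq_bigl => i; rewrite inE.
  by rewrite !prodr_const cS'.
rewrite (eq_bigr (fun j => p j * \prod_(i : 'I_r) (if (i, j) \in S' then f else 1)));
  last by move=> j _; rewrite eqG.
have HM : forall i : 'I_r, monoK k (fun j => if (i, j) \in S' then f else 1).
  move=> i; split; first by move=> j; case: ifP.
  move=> a b kab; rewrite !inE /=.
  case: ifP => hb; case: ifP => ha //.
  by move: hb; rewrite (leq_trans ha kab).
have [C _] := @cheb_prod R n p hp1 hp0 k 'I_r _ HM (index_enum 'I_r).
lra.
Qed.
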